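(* Let $\Gamma$ be a Deza graph with parameters $(n,k,k-1,a)$, $k>1$, $\beta=1$. Let $x,y$ be $NA$-vertices with $C(x)\ne C(y)$. Then (1) $x'$ and $y$ are adjacent if and only if $x$ and $y'$ are adjacent; (2) $x$ and $y$ are adjacent if and only if $x'$ and $y'$ are adjacent.
   Context: A Deza graph with parameters $(n,k,b,a)$, $a\le b$, is a $k$-regular graph on $n$ vertices in which any two distinct vertices have $a$ or $b$ common neighbours; $\beta$ is the number of vertices $u\ne v$ with exactly $b$ common neighbours with a given vertex $v$. Since $\beta=1$, for each vertex $x$ let $x_b$ denote the unique vertex having $b=k-1$ common neighbours with $x$. A vertex $x$ is an $A$-vertex if $x$ is adjacent to $x_b$, and an $NA$-vertex otherwise. For an $NA$-vertex $x$, $x'$ denotes the unique neighbour of $x$ not adjacent to $x_b$, $x_b'=(x')_b=(x_b)'$, and $C(x)=\{x,x',x_b,x_b'\}$. *)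

(* Defs.v *)
From mathcomp Require Import all_boot.
Set Implicit Arguments. Unset Strict Implicit. Unset Printing Implicit Defensive.

Definition simple_graph (T : finType) (e : rel T) : Prop :=
  symmetric e /\ irreflexive e.

Definition nbhd (T : finType) (e : rel T) (x : T) : {set T} := [set y | e x y].

Definition common (T : finType) (e : rel T) (x y : T) : {set T} :=
  [set z | e x z && e y z].

Definition deza (T : finType) (e : rel T) (n k b a : nat) : Prop :=
  [/\ simple_graph e, #|T| = n, (forall x, #|nbhd e x| = k), a <= b &
      forall x y, x != y -> #|common e x y| = a \/ #|common e x y| = b].

Definition beta_at (T : finType) (e : rel T) (b : nat) (v : T) : nat :=
  #|[set u | (u != v) && (#|common e v u| == b)]|.

(* x_b : the (unique, when beta = 1) vertex with b = k-1 common neighbours with x *)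
Definition xb (T : finType) (e : rel T) (k : nat) (x : T) : T :=
  odflt x [pick u | (u != x) && (#|common e x u| == k.-1)].

Definition A_vertex (T : finType) (e : rel T) (k : nat) (x : T) : bool :=
  e x (xb e k x).
Definition NA_vertex (T : finType) (e : rel T) (k : nat) (x : T) : bool :=
  ~~ e x (xb e k x).

Definition xprime (T : finType) (e : rel T) (k : nat) (x : T) : T :=
  odflt x [pick u | e x u && ~~ e u (xb e k x)].

Definition Cset (T : finType) (e : rel T) (k : nat) (x : T) : {set T} :=
  [set x; xprime e k x; xb e k x; xb e k (xprime e k x)].

(* Main.v *)
Require Import Defs.
From mathcomp Require Import all_boot.
Set Implicit Arguments. Unset Strict Implicit. Unset Printing Implicit Defensive.

Lemma commonC (T : finType) (e : rel T) : symmetric e -> forall u v, common e u v = common e v u.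
Proof. by move=> sy u v; apply/setP=> z; rewrite !inE andbC. Qed.

Lemma phi_spec (T : finType) (e : rel T) (n k a : nat) :
  deza e n k k.-1 a -> (forall v : T, beta_at e k.-1 v = 1) -> forall v,
  [/\ xb e k v != v, #|common e v (xb e k v)| = k.-1 &
      forall u, u != v -> #|common e v u| = k.-1 -> u = xb e k v].
Proof.
move=> D Hb v; have := Hb v; rewrite /beta_at => /eqP/cards1P [c Hc].
have Hc' : forall u, ((u != v) && (#|common e v u| == k.-1)) = (u == c).
  by move=> u; move/setP: Hc => Hc; have := Hc u; rewrite !inE.
have -> : xb e k v = c.
  rewrite /xb; case: pickP => [u Hu|H0] /=; first by apply/eqP; rewrite -Hc'.
  by have := H0 c; rewrite Hc' eqxx.
have := Hc' c; rewrite eqxx => /andP [H1 /eqP H2]; split => // u H3 H4.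
by apply/eqP; rewrite -Hc' H3 H4 eqxx.
Qed.

Lemma prime_spec (T : finType) (e : rel T) (n k a : nat) :
  deza e n k k.-1 a -> 1 < k -> (forall v : T, beta_at e k.-1 v = 1) -> forall v,
  [/\ e v (xprime e k v), ~~ e (xprime e k v) (xb e k v) &
      forall u, e v u -> ~~ e u (xb e k v) -> u = xprime e k v].
Proof.
move=> D Hk Hb v; have [[sy irr] _ Hdeg _ _] := D.
have [_ Hc _] := phi_spec D Hb v; set c := xb e k v in Hc *.
have E : [set u | e v u && ~~ e u c] = nbhd e v :\: common e v c.
  apply/setP=> u; rewrite !inE (sy c u); by case: (e v u); case: (e u c).
have : #|[set u | e v u && ~~ e u c]| = 1.
  rewrite E cardsD.
  have -> : nbhd e v :&: common e v c = common e v c.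
    by apply/setIidPr/subsetP=> u; rewrite !inE => /andP[].
  rewrite Hdeg Hc; by rewrite -subn1 subKn // ltnW.
move/eqP/cards1P=> [d Hd].
have Hd' : forall u, (e v u && ~~ e u c) = (u == d).
  by move=> u; move/setP: Hd => Hd; have := Hd u; rewrite !inE.
have -> : xprime e k v = d.
  rewrite /xprime; case: pickP => [u Hu|H0] /=; first by apply/eqP; rewrite -Hd'.
  by have := H0 d; rewrite -/c Hd' eqxx.
have := Hd' d; rewrite eqxx => /andP [H1 H2]; split => // u H3 H4.
by apply/eqP; rewrite -Hd' H3 H4.
Qed.

Lemma phi_inv (T : finType) (e : rel T) (n k a : nat) :
  deza e n k k.-1 a -> (forall v : T, beta_at e k.-1 v = 1) -> forall v,
  xb e k (xb e k v) = v.
Proof.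
move=> D Hb v; have [[sy irr] _ _ _ _] := D.
have [H1 H2 _] := phi_spec D Hb v; have [_ _ U] := phi_spec D Hb (xb e k v).
by symmetry; apply: U; rewrite 1?eq_sym // commonC.
Qed.

Lemma card_a (T : finType) (e : rel T) (n k a : nat) :
  deza e n k k.-1 a -> (forall v : T, beta_at e k.-1 v = 1) -> forall u w,
  w != u -> w != xb e k u -> #|common e u w| = a.
Proof.
move=> D Hb u w H1 H2; have [_ _ _ _ Hd] := D.
have [_ _ U] := phi_spec D Hb u.
case: (Hd u w); rewrite 1?eq_sym // => H3.
by move: (U w H1 H3) H2 => ->; rewrite eqxx.
Qed.

Lemma twin (T : finType) (e : rel T) (n k a : nat) :
  deza e n k k.-1 a -> 1 < k -> (forall v : T, beta_at e k.-1 v = 1) -> forall v u,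
  e v u != e (xb e k v) u -> u = xprime e k v \/ u = xprime e k (xb e k v).
Proof.
move=> D Hk Hb v u; have [[sy irr] _ _ _ _] := D.
have [_ _ U1] := prime_spec D Hk Hb v.
have [_ _ U2] := prime_spec D Hk Hb (xb e k v).
rewrite (phi_inv D Hb) in U2.
case E1: (e v u); case E2: (e (xb e k v) u) => //= _.
  by left; apply: U1; rewrite // sy E2.
by right; apply: U2; rewrite // sy E1.
Qed.

Lemma prime_inv (T : finType) (e : rel T) (n k a : nat) :
  deza e n k k.-1 a -> 1 < k -> (forall v : T, beta_at e k.-1 v = 1) -> forall v,
  xprime e k (xprime e k v) = v /\ xb e k (xprime e k v) = xprime e k (xb e k v).
Proof.
move=> D Hk Hb v; have [[sy irr] _ Hdeg _ _] := D.
have [P1 P2 U1] := prime_spec D Hk Hb v.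
have [Q1 Q2 U2] := prime_spec D Hk Hb (xb e k v).
rewrite (phi_inv D Hb) in Q2 U2.
set c := xb e k v in P2 U1 Q1 Q2 U2 *.
set w := xprime e k v in P1 P2 U1 *.
set w2 := xprime e k c in Q1 Q2 U2 *.
case Evc: (e v c).
  have Hw : w = c by symmetry; apply: U1; rewrite // irr.
  have Hw2 : w2 = v by symmetry; apply: U2; rewrite ?irr // sy.
  by rewrite Hw -/w2 Hw2 /c (phi_inv D Hb).
have Twin : forall z, z != w -> z != w2 -> e v z = e c z.
  move=> z H1 H2; apply/eqP/negP => /negP H.
  by case: (twin D Hk Hb H) => Hz; [move: H1 | move: H2]; rewrite Hz eqxx.
have Key : forall y, y != v -> y != c -> e w y = e w2 y.
  move=> y H1 H2.
  have C1 := card_a D Hb H1 H2.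
  have C2 : #|common e c y| = a by apply: (card_a D Hb H2); rewrite /c (phi_inv D Hb).
  have SE : common e v y :\ w = common e c y :\ w2.
    apply/setP=> z; rewrite !inE.
    have [->|Hzw] := eqVneq z w.
      by rewrite (sy c w) (negbTE P2) andbF.
    have [->|Hzw2] := eqVneq z w2.
      by rewrite /= (sy v w2) (negbTE Q2).
    by rewrite /= Twin.
  have := cardsD1 w (common e v y); have := cardsD1 w2 (common e c y).
  rewrite -SE C1 C2 !inE P1 Q1 /= (sy w y) (sy w2 y).
  by case: (e y w); case: (e y w2) => //= -> /eqP; rewrite ?eqn_add2r // => /eqP.
have Hww2 : w2 != w by apply/eqP=> E; move: P2; rewrite -E sy Q1.
have CE : common e w w2 = nbhd e w :\ v.
  apply/setP=> z; rewrite !inE.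
  have [->|Hzv] := eqVneq z v; first by rewrite (negbTE Q2) andbF.
  have [->|Hzc] := eqVneq z c; first by rewrite (negbTE P2).
  by rewrite /= Key // andbb.
have Cw : #|common e w w2| = k.-1.
  have := cardsD1 v (nbhd e w); rewrite Hdeg CE !inE sy P1 add1n => ->.
  by [].
have [_ _ Uw] := phi_spec D Hb w.
have Hxw : xb e k w = w2 by symmetry; apply: Uw.
have [_ _ Uw'] := prime_spec D Hk Hb w.
split=> //; symmetry; apply: Uw'; first by rewrite sy.
by rewrite Hxw sy.
Qed.

Lemma even_closed (T : finType) (f : T -> T) : involutive f -> (forall z, f z != z) ->
  forall E : {set T}, (forall z, z \in E -> f z \in E) -> ~~ odd #|E|.
Proof.
move=> fK nf.
suff H : forall m (E : {set T}), #|E| <= m -> (forall z, z \in E -> f z \in E) -> ~~ odd #|E|.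
  by move=> E; apply: H.
elim=> [|m IH] E HE HC; first by move: HE; rewrite leqn0 => /eqP ->.
have [->|[z Hz]] := set_0Vmem E; first by rewrite cards0.
have Hfz := HC z Hz.
have C : #|E| = (#|E :\ z :\ f z|).+2.
  rewrite (cardsD1 z E) (cardsD1 (f z) (E :\ z)) Hz !inE nf Hfz.
  by [].
rewrite C /= negbK.
apply: IH; first by move: HE; rewrite C ltnS; apply: leq_trans; apply: leqnSn.
move=> u; rewrite !inE => /and3P [H1 H2 H3].
rewrite HC // andbT; apply/andP; split.
  by apply: contra H2 => /eqP/(can_inj fK) ->.
by apply: contra H1 => /eqP <-; rewrite fK.
Qed.

Lemma tw_at (T : finType) (e : rel T) (n k a : nat) :
  deza e n k k.-1 a -> 1 < k -> (forall v : T, beta_at e k.-1 v = 1) -> forall u z,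
  z != xprime e k u -> z != xb e k (xprime e k u) -> e u (xb e k z) = e u z.
Proof.
move=> D Hk Hb u z H1 H2; have [[sy irr] _ _ _ _] := D.
apply/eqP/negP => /negP H; rewrite eq_sym (sy u) (sy u) in H.
case: (twin D Hk Hb H) => Hu.
  by move: H1; rewrite Hu (prime_inv D Hk Hb z).1 eqxx.
by move: H2; rewrite Hu (prime_inv D Hk Hb (xb e k z)).1 (phi_inv D Hb) eqxx.
Qed.

Lemma gc (T : finType) (e : rel T) (n k a : nat) :
  deza e n k k.-1 a -> 1 < k -> (forall v : T, beta_at e k.-1 v = 1) -> forall u w z,
  z \in common e u w -> z != xprime e k u -> z != xb e k (xprime e k u) ->
  z != xprime e k w -> z != xb e k (xprime e k w) -> xb e k z \in common e u w.
Proof.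
move=> D Hk Hb u w z; rewrite !inE => /andP [H1 H2] ? ? ? ?.
by rewrite !(tw_at D Hk Hb) // H1.
Qed.

Lemma nadj (T : finType) (e : rel T) (n k a : nat) :
  deza e n k k.-1 a -> 1 < k -> (forall v : T, beta_at e k.-1 v = 1) -> forall v,
  ~~ e v (xb e k (xprime e k v)).
Proof.
move=> D Hk Hb v; have [[sy irr] _ _ _ _] := D.
rewrite (prime_inv D Hk Hb v).2 sy.
by have [_ H _] := prime_spec D Hk Hb (xb e k v); rewrite (phi_inv D Hb) in H.
Qed.

Lemma par2 (T : finType) (e : rel T) (n k a : nat) :
  deza e n k k.-1 a -> (forall v : T, beta_at e k.-1 v = 1) ->
  forall (D : {set T}) p q, q != p ->
  (forall z, z \in D :\ p :\ q -> xb e k z \in D :\ p :\ q) -> ~~ odd #|D| ->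
  (p \in D) = (q \in D).
Proof.
move=> Dz Hb D p q Hqp HC.
have Ev := even_closed (phi_inv Dz Hb) (fun z => let: And3 h _ _ := phi_spec Dz Hb z in h) HC.
rewrite (cardsD1 p D) (cardsD1 q (D :\ p)) !inE Hqp /=.
move: Ev; case: (p \in D); case: (q \in D) => /= Ev; rewrite /= ?Ev //= ?negbK ?Ev //.
Qed.

Lemma cset_mem (T : finType) (e : rel T) (n k a : nat) :
  deza e n k k.-1 a -> 1 < k -> (forall v : T, beta_at e k.-1 v = 1) -> forall x y,
  Cset e k x != Cset e k y ->
  [/\ y != x, y != xprime e k x, y != xb e k x & y != xb e k (xprime e k x)].
Proof.
move=> D Hk Hb x y H.
have [I1 I2] := prime_inv D Hk Hb x.
have [J1 J2] := prime_inv D Hk Hb (xb e k x).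
have [K1 K2] := prime_inv D Hk Hb (xprime e k x).
rewrite (phi_inv D Hb) in J2. rewrite I1 in K2.
have P := phi_inv D Hb.
split; apply/eqP=> E; move/eqP: H; apply; rewrite E /Cset.
- by [].
- rewrite I1; apply/setP=> z; rewrite !inE; by case: (z == x); case: (z == xprime e k x); case: (z == xb e k x); case: (z == xb e k (xprime e k x)).
- rewrite -I2 !P; apply/setP=> z; rewrite !inE; by case: (z == x); case: (z == xprime e k x); case: (z == xb e k x); case: (z == xb e k (xprime e k x)).
- rewrite -K2 !P; apply/setP=> z; rewrite !inE; by case: (z == x); case: (z == xprime e k x); case: (z == xb e k x); case: (z == xb e k (xprime e k x)).
Qed.

Theorem lemma16 (T : finType) (e : rel T) (n k a : nat) :
  deza e n k k.-1 a -> 1 < k ->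
  (forall v : T, beta_at e k.-1 v = 1) ->
  forall x y : T,
    NA_vertex e k x -> NA_vertex e k y -> Cset e k x != Cset e k y ->
    (e (xprime e k x) y = e x (xprime e k y)) /\
    (e x y = e (xprime e k x) (xprime e k y)).
Proof.
move=> D Hk Hb x y NAx NAy HC; have [[sy irr] _ _ _ _] := D.
rewrite /NA_vertex in NAx NAy.
have [Y1 Y2 Y3 Y4] := cset_mem D Hk Hb HC.
have P := phi_inv D Hb.
have [Ix1 Ix2] := prime_inv D Hk Hb x.
have [Iy1 Iy2] := prime_inv D Hk Hb y.
have [Px1 Px2 _] := prime_spec D Hk Hb x.
have [Py1 Py2 _] := prime_spec D Hk Hb y.
have Nx := nadj D Hk Hb x; have Ny := nadj D Hk Hb y.
set x1 := xprime e k x in Y2 Y4 Ix1 Ix2 Px1 Px2 Nx *.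
set y1 := xprime e k y in Iy1 Iy2 Py1 Py2 Ny *.
have Ea : ~~ odd a.
  have x1x : x1 != x by apply/eqP=> E; move: Px1; rewrite E irr.
  have x1b : x1 != xb e k x by apply/eqP=> E; move: NAx; rewrite -E Px1.
  rewrite -(card_a D Hb x1x x1b).
  apply: (even_closed P (fun z => let: And3 h _ _ := phi_spec D Hb z in h)).
  move=> z Hz; have := Hz; rewrite /common inE => /andP [H1 H2].
  apply: (gc D Hk Hb Hz); rewrite ?Ix1.
  - by apply/eqP=> E; move: H2; rewrite E irr.
  - by apply/eqP=> E; move: H1; rewrite E (negbTE Nx).
  - by apply/eqP=> E; move: H1; rewrite E irr.
  - by apply/eqP=> E; move: H1; rewrite E (negbTE NAx).
have y1x1 : y1 != x1.
  by apply/eqP=> E; move: Y1; rewrite -Iy1 E Ix1 eqxx.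
have yx1 : y != x1 by [].
split.
- have C := card_a D Hb Y1 Y3.
  have := par2 D Hb y1x1 _ (eq_ind _ (fun m => ~~ odd m) Ea _ (esym C)).
  rewrite !inE Px1 Py1 /= andbT (sy x1 y) => -> //.
  move=> z; rewrite !inE => /and4P [H1 H2 H4 H5].
  have Hz : z \in common e x y by rewrite !inE H4 H5.
  have G := gc D Hk Hb Hz.
  have G' : xb e k z \in common e x y.
    apply: G.
    + by [].
    + by apply/eqP=> E; move: H4; rewrite E (negbTE Nx).
    + by [].
    + by apply/eqP=> E; move: H5; rewrite E (negbTE Ny).
  move: G'; rewrite !inE => -> ; rewrite !andbT; apply/andP; split.
  + by apply/eqP=> E; move: H5; rewrite -(P z) E (negbTE Ny).
  + by apply/eqP=> E; move: H4; rewrite -(P z) E (negbTE Nx).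
- have y1x : y1 != x by apply/eqP=> E; move: Y2; rewrite -Iy1 E eqxx.
  have y1b : y1 != xb e k x.
    by apply/eqP=> E; move: Y4; rewrite -Iy1 E -Ix2 eqxx.
  have C := card_a D Hb y1x y1b.
  have := par2 D Hb yx1 _ (eq_ind _ (fun m => ~~ odd m) Ea _ (esym C)).
  rewrite !inE Px1 (sy y1 y) Py1 /= andbT (sy y1 x1) => -> //.
  move=> z; rewrite !inE => /and4P [H1 H2 H4 H5].
  have Hz : z \in common e x y1 by rewrite !inE H4 H5.
  have G' : xb e k z \in common e x y1.
    apply: (gc D Hk Hb Hz); rewrite ?Iy1.
    + by [].
    + by apply/eqP=> E; move: H4; rewrite E (negbTE Nx).
    + by [].
    + by apply/eqP=> E; move: H5; rewrite E (negbTE Py2).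
  move: G'; rewrite !inE => -> ; rewrite !andbT; apply/andP; split.
  + by apply/eqP=> E; move: H5; rewrite -(P z) E (negbTE Py2).
  + by apply/eqP=> E; move: H4; rewrite -(P z) E (negbTE Nx).
Qed.
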